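(* Let $\gamma_X=(X,d_X(\cdot))$ and $\gamma_Y=(Y,d_Y(\cdot))$ be any two dynamic metric spaces. For any $k\in\mathbf{Z}_+$, \[d_{\mathrm{I}}(\mathrm{rk}_k(\gamma_X),\mathrm{rk}_k(\gamma_Y))\le 2\cdot d_{\mathtt{dyn}}(\gamma_X,\gamma_Y).\]
   Context: A dynamic metric space (DMS) is a pair $\gamma_X=(X,d_X(\cdot))$ where $X$ is a nonempty finite set and $d_X(\cdot):\mathbf{R}\times X\times X\to\mathbf{R}_+$ satisfies: each $d_X(t)$ is a pseudometric, some $d_X(t_0)$ is a metric, and $t\mapsto d_X(t)(x,x')$ is continuous for all $x,x'$. For a closed interval $I$, $(\bigvee_I d_X)(x,x'):=\min_{s\in I}d_X(s)(x,x')$; $[t]^\varepsilon=[t-\varepsilon,t+\varepsilon]$. A tripod between $X$ and $Y$ is a set $Z$ with surjections $\varphi_X:Z\to X$, $\varphi_Y:Z\to Y$; it is an $\varepsilon$-tripod between $\gamma_X,\gamma_Y$ if for all $t\in\mathbf{R}$, $z,z'\in Z$: $(\bigvee_{[t]^\varepsilon}d_X)(\varphi_X(z),\varphi_X(z'))\le d_Y(t)(\varphi_Y(z),\varphi_Y(z'))+2\varepsilon$ and $(\bigvee_{[t]^\varepsilon}d_Y)(\varphi_Y(z),\varphi_Y(z'))\le d_X(t)(\varphi_X(z),\varphi_X(z'))+2\varepsilon$. $d_{\mathtt{dyn}}(\gamma_X,\gamma_Y)$ is the minimum over tripods of the infimum of $\varepsilon$ for which the tripod is an $\varepsilon$-tripod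 ($\infty$ if none). For symmetric $d$ vanishing on the diagonal, $\mathcal{R}_\delta(X,d)$ is the simplicial complex on $X$ with simplices the nonempty $\sigma$ with $d(x,x')\le\delta$ for all $x,x'\in\sigma$; $\mathrm{H}_k$ is simplicial homology over a fixed field. $\mathbf{R}^6_\times$ is $\mathbf{R}^6$ with $\mathbf{a}\le\mathbf{b}$ iff $a_1\le b_1$, $a_2\ge b_2$, $a_3\ge b_3$, $a_4\ge b_4$, $a_5\le b_5$, $a_6\le b_6$. $\mathbf{a}$ is admissible if $a_1\le a_2$, $a_4\le a_5$, $a_3,a_6\ge0$, $[a_1,a_2]\subseteq[a_4,a_5]$, $a_3\le a_6$; trivially non-admissible if no admissible $\mathbf{b}<\mathbf{a}$ in $\mathbf{R}^6_\times$ exists. $\mathrm{rk}_k(\gamma_X):\mathbf{R}^6\to\mathbf{Z}_+\cup\{\infty\}$ is the rank of $\mathrm{H}_k(\mathcal{R}_{a_3}(X,\bigvee_{[a_1,a_2]}d_X)\hookrightarrow\mathcal{R}_{a_6}(X,\bigvee_{[a_4,a_5]}d_X))$ for admissible $\mathbf{a}$, $\infty$ for trivially non-admissible $\mathbf{a}$, and $0$ otherwise; it is order-reversing on $\mathbf{R}^6_\times$. For order-reversing $F,G:\mathbf{R}^6_\times\to\mathbf{Z}_+\cup\{\infty\}$ and $\varepsilon\ge0$, let $\mathbf{a}+\vec\varepsilon:=(a_1+\varepsilon,a_2-\varepsilon,a_3-\varepsilon,a_4-\varepsilon,a_5+\varepsilon,a_6+\varepsilon)$ (the shift upward by $\varepsilon$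 in every coordinate of $\mathbf{R}^6_\times$). Then $d_{\mathrm{I}}(F,G):=\inf\{\varepsilon\ge0:\forall\mathbf{a},\ F(\mathbf{a})\ge G(\mathbf{a}+\vec\varepsilon)\text{ and }G(\mathbf{a})\ge F(\mathbf{a}+\vec\varepsilon)\}$. *)

(* Defs.v *)
From HB Require Import structures.
From mathcomp Require Import all_boot all_order all_algebra.
From mathcomp Require Import all_classical all_reals all_analysis.
Set Implicit Arguments. Unset Strict Implicit. Unset Printing Implicit Defensive.
Import Order.TTheory GRing.Theory Num.Theory.
Import numFieldNormedType.Exports.
Local Open Scope classical_set_scope.
Local Open Scope ring_scope.

Definition is_pseudometric (R : realType) (X : finType) (d : X -> X -> R) : Prop :=
  [/\ forall x y, 0 <= d x y,
      forall x, d x x = 0,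
      forall x y, d x y = d y x &
      forall x y z, d x z <= d x y + d y z].

Definition is_metric (R : realType) (X : finType) (d : X -> X -> R) : Prop :=
  is_pseudometric d /\ forall x y, d x y = 0 -> x = y.

Definition is_DMS (R : realType) (X : finType) (d : R -> X -> X -> R) : Prop :=
  [/\ (0 < #|X|)%N,
      forall t, is_pseudometric (d t),
      exists t0, is_metric (d t0) &
      forall x x', continuous (fun t => d t x x')].

(* (\/_{[a,b]} d)(x,x') = min_{s in [a,b]} d(s)(x,x')  (the min exists by
   continuity, so it is the infimum) *)
Definition bigvee (R : realType) (X : finType) (d : R -> X -> X -> R) (a b : R)
  (x x' : X) : R :=
  inf [set d s x x' | s in [set s : R | a <= s <= b]].

Definition is_eps_tripod (R : realType) (X Y : finType)
  (dX : R -> X -> X -> R) (dY : R -> Y -> Y -> R)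
  (Z : Type) (phX : Z -> X) (phY : Z -> Y) (e : R) : Prop :=
  forall (t : R) (z z' : Z),
    bigvee dX (t - e) (t + e) (phX z) (phX z') <= dY t (phY z) (phY z') + 2 * e
 /\ bigvee dY (t - e) (t + e) (phY z) (phY z') <= dX t (phX z) (phX z') + 2 * e.

Definition d_dyn (R : realType) (X Y : finType)
  (dX : R -> X -> X -> R) (dY : R -> Y -> Y -> R) : \bar R :=
  ereal_inf [set (e%:E)%E | e in [set e : R | 0 <= e /\
     exists (Z : Type) (phX : Z -> X) (phY : Z -> Y),
       [/\ (forall x, exists z, phX z = x), (forall y, exists z, phY z = y) & is_eps_tripod dX dY phX phY e]]].

(* simplicial complexes on X are predicates on {set X} (the simplices) *)
Definition rips (R : realType) (X : finType) (d : X -> X -> R) (delta : R)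
  : pred {set X} :=
  fun s => (s != finset.set0) && [forall x in s, forall y in s, d x y <= delta].

(* chains: F-valued functions on subsets of X; a k-simplex s (#|s| = k+1)
   is oriented by the linear order of X given by enum_rank *)
Definition chain (F : fieldType) (X : finType) := {ffun {set X} -> F^o}.

Definition pos_in (X : finType) (s : {set X}) (x : X) : nat :=
  #|[set y in s | (enum_rank y < enum_rank x)%N]|.

(* simplicial boundary: d[v_0..v_k] = sum_i (-1)^i [v_0..^v_i..v_k] *)
Definition bdry_fun (F : fieldType) (X : finType) (c : chain F X) : chain F X :=
  [ffun t : {set X} =>
     \sum_(s : {set X} | (t \subset s) && (#|s| == #|t|.+1)%N)
        \sum_(x in s :\: t) (-1) ^+ pos_in s x * c s].

Definition bdry (F : fieldType) (X : finType) : 'End(chain F X) :=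
  linfun (@bdry_fun F X).

Definition simplex_chain (F : fieldType) (X : finType) (s : {set X}) : chain F X :=
  [ffun t => (t == s)%:R].

Definition Cspace (F : fieldType) (X : finType) (k : nat) (K : pred {set X})
  : {vspace chain F X} :=
  <<[seq simplex_chain F s | s <- enum [pred s : {set X} | K s && (#|s| == k.+1)%N]]>>%VS.

Definition cycles (F : fieldType) (X : finType) (k : nat) (K : pred {set X})
  : {vspace chain F X} :=
  (Cspace F k K :&: lker (bdry F X))%VS.

Definition boundaries (F : fieldType) (X : finType) (k : nat) (K : pred {set X})
  : {vspace chain F X} :=
  (bdry F X @: Cspace F k.+1 K)%VS.

(* rank of H_k(K) -> H_k(L) induced by an inclusion K ⊆ L:
   dim Z_k(K) / (Z_k(K) ∩ B_k(L))  *)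
Definition hom_rank (F : fieldType) (X : finType) (k : nat) (K L : pred {set X}) : nat :=
  (\dim (cycles F k K) - \dim (cycles F k K :&: boundaries F k L))%N.

Record R6 (R : realType) := mkR6 { c1 : R; c2 : R; c3 : R; c4 : R; c5 : R; c6 : R }.

Definition le6 (R : realType) (a b : R6 R) : Prop :=
  [/\ c1 a <= c1 b, c2 b <= c2 a, c3 b <= c3 a,
      c4 b <= c4 a & (c5 a <= c5 b /\ c6 a <= c6 b)].

Definition admissible (R : realType) (a : R6 R) : Prop :=
  [/\ c1 a <= c2 a, c4 a <= c5 a, 0 <= c3 a /\ 0 <= c6 a,
      (c4 a <= c1 a /\ c2 a <= c5 a) & c3 a <= c6 a].

Definition trivially_nonadmissible (R : realType) (a : R6 R) : Prop :=
  ~ exists b : R6 R, [/\ le6 b a, b <> a & admissible b].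

Definition rk (R : realType) (F : fieldType) (k : nat) (X : finType)
  (d : R -> X -> X -> R) (a : R6 R) : \bar R :=
  if `[< admissible a >] then
    ((hom_rank F k (rips (bigvee d (c1 a) (c2 a)) (c3 a))
                   (rips (bigvee d (c4 a) (c5 a)) (c6 a)))%:R)%:E
  else if `[< trivially_nonadmissible a >] then +oo%E else 0%E.

Definition shift6 (R : realType) (a : R6 R) (e : R) : R6 R :=
  mkR6 (c1 a + e) (c2 a - e) (c3 a - e) (c4 a - e) (c5 a + e) (c6 a + e).

Definition d_I (R : realType) (f g : R6 R -> \bar R) : \bar R :=
  ereal_inf [set (e%:E)%E | e in [set e : R | 0 <= e /\
    forall a : R6 R, (g (shift6 a e) <= f a)%E /\ (f (shift6 a e) <= g a)%E]].

(* Main.v *)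
Require Import Defs.
From HB Require Import structures.
From mathcomp Require Import all_boot all_order all_algebra.
From mathcomp Require Import all_classical all_reals all_analysis.
From mathcomp Require Import ring lra zify.
Set Implicit Arguments. Unset Strict Implicit. Unset Printing Implicit Defensive.
Import Order.TTheory GRing.Theory Num.Theory.
Local Open Scope ring_scope.

Lemma linfunE' (K : fieldType) (aT rT : vectType K) (f : aT -> rT) :
  linear f -> forall x, linfun f x = f x.
Proof.
move=> hf x.
pose g : {linear aT -> rT} := HB.pack f (GRing.isLinear.Build K aT rT *:%R f hf).
exact: (lfunE g x).
Qed.

Section Chains.
Variables (F : fieldType).

Definition NN (V : finType) (x y : V) : bool := (enum_rank x < enum_rank y)%N.

Lemma NN_irr (V : finType) (x : V) : NN x x = false.
Proof. by rewrite /NN ltnn. Qed.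

Lemma NN_tot (V : finType) (x y : V) : x != y -> NN x y = ~~ NN y x.
Proof.
move=> nxy; rewrite /NN; case: (ltngtP (enum_rank x) (enum_rank y)) => //= h.
by case/eqP: nxy; apply: enum_rank_inj; exact: ord_inj h.
Qed.

Lemma scaleFE (k x : F^o) : k *: x = k * x. Proof. by []. Qed.

Definition sgn (n : nat) : F := (-1) ^+ n.

Lemma sgnD m n : sgn (m + n) = sgn m * sgn n.
Proof. by rewrite /sgn exprD. Qed.

Lemma sgnK n : sgn n * sgn n = 1.
Proof. by rewrite -sgnD /sgn -signr_odd addnn odd_double expr0. Qed.

Lemma sgn_tot (V : finType) (x y : V) : x != y -> sgn (NN x y) * sgn (NN y x) = -1.
Proof. by move=> /NN_tot ->; case: (NN y x); rewrite /sgn /= ?expr1 ?expr0 ?mulr1 ?mul1r. Qed.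

Lemma pos_inU (V : finType) (T : {set V}) (x y : V) :
  x \notin T -> pos_in (x |: T) y = (pos_in T y + NN x y)%N.
Proof.
move=> xT; rewrite /pos_in /NN.
set A := [set z in T | _].
have -> : [set z in x |: T | (enum_rank z < enum_rank y)%N] =
  (if (enum_rank x < enum_rank y)%N then x |: A else A).
  apply/setP => z; rewrite !inE; case: (eqVneq z x) => [->|nzx] /=;
  case: ifP => h; rewrite ?inE ?eqxx ?h ?(negbTE xT) ?(negbTE nzx) //=.
case: ifP => h; last by rewrite addn0.
by rewrite cardsU1 inE (negbTE xT) /= addn1 add1n.
Qed.

Lemma pos_inD (V : finType) (T : {set V}) (x y : V) :
  x \in T -> pos_in T y = (pos_in (T :\ x) y + NN x y)%N.
Proof.
move=> xT; rewrite -{1}(finset.setD1K xT) pos_inU //.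
by rewrite !inE eqxx.
Qed.

Lemma pos_in_self_U (V : finType) (T : {set V}) (x : V) :
  x \notin T -> pos_in (x |: T) x = pos_in T x.
Proof. by move=> xT; rewrite pos_inU // NN_irr addn0. Qed.

Lemma pos_in_self_D (V : finType) (T : {set V}) (x : V) :
  x \in T -> pos_in (T :\ x) x = pos_in T x.
Proof. by move=> xT; rewrite (pos_inD x xT) NN_irr addn0. Qed.

Variable V : finType.
Notation ch := (chain F V).

Definition e (S : {set V}) : ch := simplex_chain F S.

Lemma eE S T : e S T = (T == S)%:R.
Proof. by rewrite /e /simplex_chain ffunE. Qed.

Definition cone (a : V) (c : ch) : ch :=
  [ffun T : {set V} => if a \in T then sgn (pos_in T a) * c (T :\ a) else 0].

Lemma cone_is_linear a : linear (cone a).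
Proof.
move=> k c d; apply/ffunP => T; rewrite !ffunE.
by case: ifP => _; rewrite !scaleFE ?mulr0 ?addr0 //; ring.
Qed.
HB.instance Definition _ a := GRing.isLinear.Build F ch ch *:%R (cone a) (cone_is_linear a).

Lemma coneE a S :
  cone a (e S) = if a \in S then 0 else sgn (pos_in S a) *: e (a |: S).
Proof.
apply/ffunP => T; rewrite !ffunE.
case: (boolP (a \in S)) => aS; case: (boolP (a \in T)) => aT; rewrite ?ffunE //.
- case: eqP => h; last by rewrite mulr0.
  by move: aS; rewrite -h !inE eqxx.
- rewrite ?ffunE scaleFE; case: (eqVneq (T :\ a) S) => h.
    by rewrite -h finset.setD1K // eqxx pos_in_self_D.
  case: eqP => h2; last by rewrite !mulr0.
  by case/eqP: h; rewrite h2 setU1K.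
- rewrite ?ffunE scaleFE; case: eqP => h; last by rewrite mulr0.
  by move: aT; rewrite h !inE eqxx.
Qed.

Lemma cone_anti a b c : cone a (cone b c) = - cone b (cone a c).
Proof.
apply/ffunP => T; rewrite !ffunE.
case: (eqVneq a b) => [<-|nab].
  rewrite !inE eqxx /=.
  by case: ifP => _; rewrite ?mulr0 ?oppr0.
have nba : b != a by rewrite eq_sym.
rewrite !inE nab nba /=.
case: (boolP (a \in T)) => aT; case: (boolP (b \in T)) => bT /=;
  rewrite ?mulr0 ?oppr0 //.
have -> : T :\ b :\ a = T :\ a :\ b by rewrite !finset.setDDl finset.setUC.
rewrite (pos_inD b aT) (pos_inD a bT) !sgnD.
have := sgn_tot nab.
set x := sgn (NN a b); set y := sgn (NN b a) => hxy.
rewrite -[RHS]mulN1r -hxy.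
rewrite [RHS](_ : _ = (x * x) * (sgn (pos_in (T :\ a) b) * y * (sgn (pos_in (T :\ b) a) * c (T :\ a :\ b)))); last by ring.
rewrite /x sgnK mul1r; ring.
Qed.

End Chains.

Section Bd.
Variables (F : fieldType) (V : finType).
Notation ch := (chain F V).
Notation sgn := (@sgn F).

Definition bd (c : ch) : ch :=
  [ffun t : {set V} => \sum_(x | x \notin t) sgn (pos_in t x) * c (x |: t)].

Lemma bd_is_linear : linear bd.
Proof.
move=> k c d; apply/ffunP => t; rewrite !ffunE scaleFE mulr_sumr -big_split.
by apply: eq_bigr => x _; rewrite !ffunE scaleFE mulrDr mulrCA.
Qed.
HB.instance Definition _ := GRing.isLinear.Build F ch ch *:%R bd bd_is_linear.

Lemma bdry_funE c : bdry_fun c = bd c.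
Proof.
apply/ffunP => t; rewrite !ffunE.
rewrite (exchange_big_dep (fun x => x \notin t)) /=; last first.
  by move=> s x _; rewrite inE => /andP[].
apply: eq_bigr => x xt.
rewrite (big_pred1 (x |: t)); last first.
  move=> s; apply/idP/idP.
    case/andP => /andP[ts /eqP cs]; rewrite inE => /andP[_ xs].
    apply/eqP/eqP; rewrite eq_sym eqEcard cs cardsU1 xt add1n leqnn andbT.
    by rewrite finset.subUset finset.sub1set xs ts.
  move/eqP => ->; rewrite finset.subsetUr cardsU1 xt add1n eqxx /= !inE eqxx.
  by rewrite xt.
by rewrite pos_in_self_U.
Qed.

Lemma bdryE c : bdry F V c = bd c.
Proof.
rewrite /bdry linfunE'; first exact: bdry_funE.
move=> k c1 c2; rewrite !bdry_funE; exact: bd_is_linear.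
Qed.

Lemma bd_e0 : bd (e F (finset.set0 : {set V})) = 0.
Proof.
apply/ffunP => t; rewrite !ffunE big1 // => x _; rewrite eE.
case: eqP => h; last by rewrite mulr0.
by have := setU11 x t; rewrite h inE.
Qed.

Lemma bd_cone a c : bd (cone a c) = c - cone a (bd c).
Proof.
apply/ffunP => t; rewrite !ffunE.
case: (boolP (a \in t)) => at_; last first.
  rewrite subr0 (bigD1 a) //= big1; last first.
    move=> x /andP[_ xa]; rewrite ffunE !inE eq_sym (negbTE xa) (negbTE at_) /=.
    by rewrite mulr0.
  rewrite addr0.
  rewrite ffunE setU11 pos_in_self_U // setU1K // mulrA sgnK mul1r.
  by [].
have aa : a \notin t :\ a by rewrite !inE eqxx.
rewrite (bigD1 a aa) /= finset.setD1K // pos_in_self_D // mulrDr mulrA sgnK.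
rewrite mul1r opprD addrA subrr add0r mulr_sumr -sumrN.
rewrite [RHS](eq_bigl (fun x => x \notin t)); last first.
  move=> x; rewrite !inE negb_and negbK; case: eqP => [->|] /=; by rewrite ?at_ ?andbT.
apply: eq_bigr => x xt.
have xa : x != a by apply: contraNneq xt => ->.
rewrite ffunE !inE at_ orbT.
have -> : (x |: t) :\ a = x |: (t :\ a).
  apply/setP => z; rewrite !inE; case: (eqVneq z a) => [->|] //=.
  by rewrite eq_sym (negbTE xa).
rewrite (pos_inD x at_) (pos_inU a xt) !sgnD.
have := sgn_tot F xa.
set p := sgn (NN x a); set q := sgn (NN a x) => hpq.
rewrite -[X in _ = X]mulN1r -hpq; ring.
Qed.

End Bd.

Section OC.
Variable F : fieldType.
Notation sgn := (@sgn F).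

Fixpoint oc (V : finType) (l : seq V) : chain F V :=
  if l is a :: l' then cone a (oc l') else e F finset.set0.

Lemma ocE (V : finType) (l : seq V) :
  exists n, oc l = (if uniq l then sgn n else 0) *: e F [set:: l].
Proof.
elim: l => [|a l [n IH]] /=; first by exists 0%N; rewrite finset.set_nil /sgn expr0 scale1r.
rewrite IH linearZ /= coneE finset.set_cons inE.
case: (boolP (a \in l)) => al /=.
  by exists 0%N; rewrite scaler0 scale0r.
exists (n + pos_in [set:: l] a)%N; rewrite scalerA sgnD.
by case: (uniq l); rewrite ?mul0r ?scale0r.
Qed.

Lemma oc_nuniq (V : finType) (l : seq V) : ~~ uniq l -> oc l = 0.
Proof. by move=> /negbTE h; have [n ->] := ocE l; rewrite h scale0r. Qed.

Lemma ocMF (V : finType) (p q : seq V) a :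
  oc (p ++ a :: q) = sgn (size p) *: oc (a :: p ++ q).
Proof.
elim: p => [|x p IH] /=; first by rewrite /sgn expr0 scale1r.
rewrite IH linearZ /= cone_anti scalerN -scaleNr /sgn exprS mulN1r.
by [].
Qed.

Lemma ocAL (V : finType) (l l' : seq V) : perm_eq l l' ->
  exists n, forall (W : finType) (f : V -> W),
    oc (map f l) = sgn n *: oc (map f l').
Proof.
elim: l l' => [|a m IH] l' hp.
  exists 0%N => W f; move: hp; rewrite perm_sym => /perm_nilP ->.
  by rewrite /sgn expr0 scale1r.
have al' : a \in l' by rewrite -(perm_mem hp) mem_head.
case/splitPr: al' hp => p q hp.
have hm : perm_eq m (p ++ q).
  rewrite -(perm_cons a); apply: (@perm_trans _ (p ++ a :: q)) => //.
  by rewrite (perm_catCA p [:: a] q).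
have [n IHn] := IH _ hm.
exists (n + size p)%N => W f.
rewrite /= IHn linearZ /= !map_cat ocMF size_map scalerA sgnD -mulrA sgnK mulr1.
by [].
Qed.

Definition sgS (V : finType) (S : {set V}) : F := oc (enum S) S.

Lemma oc_enum (V : finType) (S : {set V}) : oc (enum S) = sgS S *: e F S.
Proof.
have [n h] := ocE (enum S).
rewrite /sgS h enum_uniq set_enum ffunE eE eqxx scaleFE mulr1.
by [].
Qed.

Lemma sgSK (V : finType) (S : {set V}) : sgS S * sgS S = 1.
Proof.
have [n h] := ocE (enum S).
by rewrite /sgS h enum_uniq set_enum ffunE eE eqxx scaleFE mulr1 sgnK.
Qed.

Lemma e_oc (V : finType) (S : {set V}) : e F S = sgS S *: oc (enum S).
Proof. by rewrite oc_enum scalerA sgSK scale1r. Qed.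

Lemma chain_dec (V : finType) (c : chain F V) : c = \sum_S c S *: e F S.
Proof.
apply/ffunP => T; rewrite sum_ffunE (bigD1 T) //= big1.
  by rewrite addr0 ffunE eE eqxx scaleFE mulr1.
by move=> S nST; rewrite ffunE eE eq_sym (negbTE nST) scaleFE mulr0.
Qed.

Definition push_def (V W : finType) (f : V -> W) (c : chain F V) : chain F W :=
  \sum_(S : {set V}) c S *: (sgS S *: oc (map f (enum S))).
Fact push_key : unit. Proof. by []. Qed.
Definition push := locked_with push_key push_def.
Canonical push_unlockable := [unlockable fun push].
Lemma pushE (V W : finType) (f : V -> W) c : push f c = push_def f c.
Proof. by rewrite unlock. Qed.

Lemma push_is_linear (V W : finType) (f : V -> W) : linear (push f).
Proof.
move=> k c d; rewrite !pushE /push_def scaler_sumr -big_split; apply: eq_bigr => S _.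
by rewrite !ffunE scalerDl scaleFE !scalerA.
Qed.
HB.instance Definition _ (V W : finType) (f : V -> W) :=
  GRing.isLinear.Build F (chain F V) (chain F W) *:%R (push f) (push_is_linear f).

Lemma push_e (V W : finType) (f : V -> W) (S : {set V}) :
  push f (e F S) = sgS S *: oc (map f (enum S)).
Proof.
rewrite pushE /push_def (bigD1 S) //= big1.
  by rewrite addr0 eE eqxx scale1r.
by move=> T nTS; rewrite eE (negbTE nTS) scale0r.
Qed.

Lemma push_oc_enum (V W : finType) (f : V -> W) (S : {set V}) :
  push f (oc (enum S)) = oc (map f (enum S)).
Proof. by rewrite oc_enum linearZ /= push_e scalerA sgSK scale1r. Qed.

Lemma push_oc (V W : finType) (f : V -> W) (l : seq V) :
  push f (oc l) = oc (map f l).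
Proof.
case: (boolP (uniq l)) => ul; last first.
  rewrite oc_nuniq // linear0 oc_nuniq //.
  by apply: contra ul; exact: map_uniq.
have hp : perm_eq l (enum [set:: l]).
  by apply: uniq_perm => //; [exact: enum_uniq | move=> x; rewrite mem_enum inE].
have [n hn] := ocAL hp.
have := hn V id; rewrite !map_id => ->.
by rewrite linearZ /= push_oc_enum hn.
Qed.

Lemma lin_ext (V W : finType) (g h : {linear chain F V -> chain F W}) :
  (forall S : {set V}, g (oc (enum S)) = h (oc (enum S))) -> forall c, g c = h c.
Proof.
move=> H c; rewrite (chain_dec c) !linear_sum; apply: eq_bigr => S _.
by rewrite !linearZ /= e_oc !linearZ /= H.
Qed.

Lemma push_cone (V W : finType) (f : V -> W) a c :
  push f (cone a c) = cone (f a) (push f c).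
Proof.
have h : forall S : {set V},
    push f (cone a (oc (enum S))) = cone (f a) (push f (oc (enum S))).
  move=> S; have -> : cone a (oc (enum S)) = oc (a :: enum S) by [].
  by rewrite !push_oc.
rewrite (chain_dec c) !linear_sum; apply: eq_bigr => S _.
by rewrite e_oc !linearZ /= h.
Qed.

Lemma push_bd_oc (V W : finType) (f : V -> W) (l : seq V) :
  push f (bd (oc l)) = bd (oc (map f l)).
Proof.
elim: l => [|a l IH] /=; first by rewrite !bd_e0 linear0.
by rewrite !bd_cone linearB /= push_cone IH push_oc.
Qed.

Lemma push_bd (V W : finType) (f : V -> W) c :
  push f (bd c) = bd (push f c).
Proof.
rewrite (chain_dec c) !linear_sum; apply: eq_bigr => S _.
by rewrite e_oc !linearZ /= push_bd_oc push_oc.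
Qed.

Lemma push_comp (U V W : finType) (f : U -> V) (g : V -> W) c :
  push g (push f c) = push (g \o f) c.
Proof.
rewrite (chain_dec c) !linear_sum; apply: eq_bigr => S _.
by rewrite !linearZ /= !push_e linearZ /= push_oc map_comp.
Qed.

Lemma push_ext (V W : finType) (f g : V -> W) c :
  f =1 g -> push f c = push g c.
Proof.
move=> fg; rewrite !pushE /push_def; apply: eq_bigr => S _.
by rewrite (eq_map fg).
Qed.

Lemma push_id (V : finType) (c : chain F V) : push id c = c.
Proof.
rewrite [in LHS](chain_dec c) linear_sum [in RHS](chain_dec c); apply: eq_bigr => S _.
by rewrite linearZ /= push_e map_id -e_oc.
Qed.

End OC.

Section Homotopy.
Variable F : fieldType.
Notation sgn := (@sgn F).

Definition Rv (V : finType) (v : V) (c : chain F V) : chain F V :=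
  [ffun T : {set V} => if v \in T then c T else 0].

Lemma Rv_is_linear (V : finType) (v : V) : linear (Rv v).
Proof.
move=> k c d; apply/ffunP => T; rewrite !ffunE.
by case: ifP => _; rewrite ?scaleFE ?mulr0 ?addr0.
Qed.
HB.instance Definition _ (V : finType) (v : V) :=
  GRing.isLinear.Build F (chain F V) (chain F V) *:%R (Rv v) (Rv_is_linear v).

Lemma Rv_cone (V : finType) (v : V) c : Rv v (cone v c) = cone v c.
Proof. by apply/ffunP => T; rewrite !ffunE; case: (v \in T). Qed.

Lemma Rv_oc (V : finType) (v : V) l : v \notin l -> Rv v (oc F l) = 0.
Proof.
move=> vl; have [n ->] := ocE F l; apply/ffunP => T; rewrite !ffunE.
case: ifP => // vT; rewrite scaleFE; case: eqP => [h|]; last by rewrite mulr0.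
by move: vT; rewrite h inE (negbTE vl).
Qed.

Lemma Rv_e (V : finType) (v : V) (S : {set V}) : v \notin S -> Rv v (e F S) = 0.
Proof.
move=> vS; apply/ffunP => T; rewrite !ffunE.
case: ifP => // vT; case: eqP => // h.
by move: vT; rewrite h (negbTE vS).
Qed.

Lemma Rv_bd_e (V : finType) (v : V) (S : {set V}) : v \notin S -> Rv v (bd (e F S)) = 0.
Proof.
move=> vS; apply/ffunP => T; rewrite !ffunE.
case: ifP => // vT; rewrite big1 // => x _; rewrite eE.
case: eqP => [h|]; last by rewrite mulr0.
by move: vS; rewrite -h !inE vT orbT.
Qed.

Definition Dh (V W : finType) (u w : V -> W) (v : V) (c : chain F V) : chain F W :=
  cone (w v) (push u (Rv v c)).

Lemma Dh_is_linear (V W : finType) (u w : V -> W) (v : V) : linear (Dh u w v).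
Proof. by move=> k c d; rewrite /Dh !linearP. Qed.
HB.instance Definition _ (V W : finType) (u w : V -> W) (v : V) :=
  GRing.isLinear.Build F (chain F V) (chain F W) *:%R (Dh u w v) (Dh_is_linear u w v).

Lemma HT_oc (V W : finType) (u w : V -> W) (v : V) (m : seq V) :
  (forall x, x != v -> u x = w x) -> v \notin m ->
  bd (Dh u w v (oc F (v :: m))) + Dh u w v (bd (oc F (v :: m))) =
  push u (oc F (v :: m)) - push w (oc F (v :: m)).
Proof.
move=> uw vm.
have Hm : push u (oc F m) = push w (oc F m).
  rewrite !push_oc; congr (oc F _); apply/eq_in_map => x xm.
  by apply: uw; apply: contraNneq vm => <-.
rewrite /Dh /= Rv_cone bd_cone bd_cone linearB /= Rv_oc // sub0r linearN /=.
rewrite Rv_cone -push_bd bd_cone linearB /= [push w _]push_cone -Hm.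
rewrite [cone (w v) (_ - _)]linearB linearN /=.
by rewrite opprB addrA addrAC addrK.
Qed.

Lemma HT (V W : finType) (u w : V -> W) (v : V) (c : chain F V) :
  (forall x, x != v -> u x = w x) ->
  bd (Dh u w v c) + Dh u w v (bd c) = push u c - push w c.
Proof.
move=> uw.
rewrite (chain_dec c) !linear_sum -!big_split /=; apply: eq_bigr => S _.
rewrite !linearZ /= -!scalerDr; congr (_ *: _).
case: (boolP (v \in S)) => vS; last first.
  rewrite /Dh Rv_e // Rv_bd_e // !linear0 addr0 !push_e.
  have -> : map u (enum S) = map w (enum S).
    apply/eq_in_map => x; rewrite mem_enum => xS; apply: uw.
    by apply: contraNneq vS => <-.
  by rewrite subrr.
have hp : perm_eq (enum S) (v :: enum (S :\ v)).
  apply: uniq_perm; rewrite ?enum_uniq //=.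
    by rewrite enum_uniq andbT mem_enum !inE eqxx.
  by move=> x; rewrite inE !mem_enum !inE; case: eqP => [->|].
have [n hn] := ocAL F hp.
have := hn V id; rewrite !map_id => he.
rewrite e_oc he !linearZ /= -!scalerDr; congr (_ *: (_ *: _)).
apply: (HT_oc (m := enum (S :\ v)) uw).
by rewrite mem_enum !inE eqxx.
Qed.

End Homotopy.

Section Spaces.
Variable F : fieldType.
Notation sgn := (@sgn F).

Definition dclosed (V : finType) (L : pred {set V}) :=
  forall A B : {set V}, L A -> B \subset A -> B != finset.set0 -> L B.

Lemma mem_Cspace (V : finType) k (K : pred {set V}) (S : {set V}) :
  K S -> #|S| = k.+1 -> e F S \in Cspace F k K.
Proof.
move=> KS cS; apply: memv_span; apply/mapP; exists S => //.
by rewrite mem_enum inE /= KS cS eqxx.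
Qed.

Lemma Cspace_map (V W : finType) (g : chain F V -> chain F W) k
    (K : pred {set V}) (U : {vspace chain F W}) :
  linear g -> (forall S, K S -> #|S| = k.+1 -> g (e F S) \in U) ->
  forall c, c \in Cspace F k K -> g c \in U.
Proof.
move=> lg H c cC.
have sub : (linfun g @: Cspace F k K <= U)%VS.
  rewrite limg_span; apply/span_subvP => y /mapP[x /mapP[S SP ->] ->].
  rewrite linfunE' //; move: SP; rewrite mem_enum inE /= => /andP[KS /eqP cS].
  exact: H.
rewrite -(linfunE' lg); apply: (subvP sub); exact: memv_img.
Qed.

Lemma card_set_seq (V : finType) (l : seq V) : uniq l -> #|[set:: l]| = size l.
Proof. by move=> ul; rewrite cardsE; apply/card_uniqP. Qed.

Lemma oc_in_Cspace (V : finType) k (K : pred {set V}) (l : seq V) :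
  (uniq l -> K [set:: l] /\ size l = k.+1) -> oc F l \in Cspace F k K.
Proof.
move=> H; have [n ->] := ocE F l.
case: (boolP (uniq l)) => ul; last by rewrite scale0r mem0v.
case: (H ul) => KS sl; apply: memvZ; apply: mem_Cspace => //.
by rewrite card_set_seq.
Qed.

Lemma set_map_enum (V W : finType) (f : V -> W) (S : {set V}) :
  [set:: map f (enum S)] = f @: S.
Proof.
apply/setP => x; rewrite inE; apply/mapP/imsetP => [[y]|[y]];
  by rewrite ?mem_enum => yS ->; exists y; rewrite ?mem_enum.
Qed.

Lemma push_Cspace (V W : finType) (f : V -> W) k (K : pred {set V})
    (K' : pred {set W}) :
  (forall S, K S -> #|S| = k.+1 -> K' (f @: S)) ->
  forall c, c \in Cspace F k K -> push f c \in Cspace F k K'.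
Proof.
move=> H; apply: Cspace_map; first exact: push_is_linear.
move=> S KS cS; rewrite push_e; apply: memvZ; apply: oc_in_Cspace => _.
by rewrite set_map_enum size_map -cardE cS; split => //; apply: H.
Qed.

Lemma e_split (V : finType) (v : V) (S : {set V}) :
  v \in S -> exists k : F, e F S = k *: oc F (v :: enum (S :\ v)).
Proof.
move=> vS.
have hp : perm_eq (enum S) (v :: enum (S :\ v)).
  apply: uniq_perm; rewrite ?enum_uniq //=.
    by rewrite enum_uniq andbT mem_enum !inE eqxx.
  by move=> x; rewrite inE !mem_enum !inE; case: eqP => [->|].
have [n hn] := ocAL F hp.
have := hn V id; rewrite !map_id => he.
by exists (sgS F S * sgn n); rewrite e_oc he scalerA.
Qed.

Lemma Dh_Cspace (V W : finType) (u w : V -> W) (v : V) k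
    (K : pred {set V}) (L : pred {set W}) :
  (forall S, K S -> #|S| = k.+1 -> L (u @: S :|: w @: S)) -> dclosed L ->
  forall c, c \in Cspace F k K -> Dh u w v c \in Cspace F k.+1 L.
Proof.
move=> H dL; apply: Cspace_map; first exact: Dh_is_linear.
move=> S KS cS.
case: (boolP (v \in S)) => vS; last by rewrite /Dh Rv_e // !linear0 mem0v.
have [kk ->] := e_split vS; rewrite linearZ; apply: memvZ.
change (Dh u w v (oc F (v :: enum (S :\ v))) \in Cspace F k.+1 L).
have -> : Dh u w v (oc F (v :: enum (S :\ v))) =
    oc F (w v :: map u (v :: enum (S :\ v))).
  rewrite /Dh (_ : oc F (v :: enum (S :\ v)) = cone v (oc F (enum (S :\ v)))) //.
  rewrite Rv_cone (_ : cone v (oc F (enum (S :\ v))) = oc F (v :: enum (S :\ v))) //.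
  by rewrite push_oc.
apply: (oc_in_Cspace (l := w v :: map u (v :: enum (S :\ v)))) => _; split.
  apply: (dL _ _ (H S KS cS)).
    apply/fintype.subsetP => x; rewrite inE /= inE => /orP[/eqP ->|].
      by rewrite inE; apply/orP; right; apply: imset_f.
    rewrite inE => /orP[/eqP ->|/mapP[y]]; first by rewrite inE imset_f.
    rewrite mem_enum !inE => /andP[_ yS] ->.
    by rewrite imset_f.
  by apply/finset.set0Pn; exists (w v); rewrite inE mem_head.
rewrite /= size_map -cardE.
by move: cS; rewrite (cardsD1 v S) vS add1n => [[->]].
Qed.

Lemma cyclesP (V : finType) k (K : pred {set V}) (z : chain F V) :
  z \in cycles F k K -> z \in Cspace F k K /\ bd z = 0.
Proof. by case/memv_capP => zC; rewrite memv_ker bdryE => /eqP. Qed.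

Lemma cyclesI (V : finType) k (K : pred {set V}) (z : chain F V) :
  z \in Cspace F k K -> bd z = 0 -> z \in cycles F k K.
Proof. by move=> zC bz; apply/memv_capP; split => //; rewrite memv_ker bdryE bz. Qed.

Lemma bd_boundaries (V : finType) k (L : pred {set V}) (c : chain F V) :
  c \in Cspace F k.+1 L -> bd c \in boundaries F k L.
Proof. by move=> cC; rewrite -bdryE; apply: memv_img. Qed.

Lemma HT_bound (V : finType) (u w : V -> V) (v : V) k
    (K L : pred {set V}) (z : chain F V) :
  (forall x, x != v -> u x = w x) ->
  (forall S, K S -> #|S| = k.+1 -> L (u @: S :|: w @: S)) -> dclosed L ->
  z \in cycles F k K -> push u z - push w z \in boundaries F k L.
Proof.
move=> uw H dL /cyclesP [zC bz].
rewrite -(HT _ uw) bz linear0 addr0.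
by apply: bd_boundaries; apply: Dh_Cspace H dL z zC.
Qed.

Lemma tele (V : finType) (h : V -> V) k (K L : pred {set V}) (z : chain F V) :
  (forall S, K S -> #|S| = k.+1 -> L (S :|: h @: S)) -> dclosed L ->
  z \in cycles F k K -> push h z - z \in boundaries F k L.
Proof.
move=> H dL zc.
pose hi (i : nat) (x : V) := if (enum_rank x < i)%N then h x else x.
have sub : forall i (S : {set V}), hi i @: S \subset S :|: h @: S.
  move=> i S; apply/fintype.subsetP => y /imsetP[x xS ->]; rewrite /hi.
  by case: ifP => _; rewrite inE ?xS ?imset_f ?orbT.
suff: forall i, push (hi i) z - z \in boundaries F k L.
  by move/(_ #|V|); rewrite (@push_ext _ _ _ (hi #|V|) h) // => x; rewrite /hi ltn_ord.
elim => [|i IH].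
  rewrite (@push_ext _ _ _ (hi 0%N) id); first by rewrite push_id subrr mem0v.
  by move=> x; rewrite /hi ltn0.
case: (ltnP i #|V|) => iV; last first.
  rewrite (@push_ext _ _ _ (hi i.+1) (hi i)) // => x; rewrite /hi.
  by rewrite !(leq_trans (ltn_ord (enum_rank x))) ?(leqW iV).
pose v := enum_val (Ordinal iV).
have -> : push (hi i.+1) z - z = (push (hi i.+1) z - push (hi i) z) + (push (hi i) z - z).
  by rewrite addrA subrK.
apply: memvD IH.
apply: (HT_bound (v := v) (K := K)) => //.
  move=> x xv; rewrite /hi ltnS leq_eqVlt.
  suff -> : (nat_of_ord (enum_rank x) == i) = false by [].
  apply/negbTE; apply: contra xv => /eqP hx.
  apply/eqP; rewrite /v -(enum_rankK x); congr enum_val; exact: ord_inj.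
move=> S KS cS; apply: (dL _ _ (H S KS cS)).
  by rewrite finset.subUset !sub.
apply/finset.set0Pn; have /finset.set0Pn [x xS] : S != finset.set0 by rewrite -card_gt0 cS.
by exists (hi i.+1 x); rewrite inE imset_f.
Qed.

End Spaces.

Lemma LA (K : fieldType) (U U' : vectType K) (A B : {vspace U})
    (A' B' : {vspace U'}) (g : 'Hom(U, U')) :
  (g @: A <= A')%VS -> (forall a, a \in A -> g a \in B' -> a \in B) ->
  (\dim A - \dim (A :&: B) <= \dim A' - \dim (A' :&: B'))%N.
Proof.
move=> gA H.
set M := (g @: A)%VS; set P := (A :&: B)%VS.
have d1 := limg_ker_dim g A.
have d2 := limg_ker_dim g P.
have s1 : (A :&: lker g <= P :&: lker g)%VS.
  apply/subvP => a /memv_capP [aA ak]; apply/memv_capP; split => //.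
  apply/memv_capP; split => //; apply: H aA _.
  by rewrite memv_ker in ak; rewrite (eqP ak) mem0v.
have s2 : (M :&: B' <= g @: P)%VS.
  apply/subvP => m /memv_capP [/memv_imgP [a aA ->] mB]; apply: memv_img.
  by apply/memv_capP; split => //; exact: H.
have e1 := dimvS s1; have e2 := dimvS s2.
have d3 := dimv_sum_cap M (A' :&: B').
have s3 : (M + (A' :&: B') <= A')%VS by rewrite subv_add gA capvSl.
have s4 : (M :&: (A' :&: B') <= M :&: B')%VS by apply: capvS => //; exact: capvSr.
have e3 := dimvS s3; have e4 := dimvS s4.
have e5 := dimvS (capvSl A' B').
rewrite -/M -/P in d1 d2 e1 e2 d3 e3 e4 e5 *.
lia.
Qed.

Section HLsec.
Variable F : fieldType.

Lemma HL (X Y : finType) (f : Y -> X) (g : X -> Y) k (KX LX : pred {set X})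
    (KY LY : pred {set Y}) :
  (forall S, KY S -> #|S| = k.+1 -> KX (f @: S)) ->
  (forall S, LX S -> #|S| = k.+2 -> LY (g @: S)) ->
  (forall S, KY S -> #|S| = k.+1 -> LY (S :|: (g \o f) @: S)) ->
  dclosed LY ->
  (hom_rank F k KY LY <= hom_rank F k KX LX)%N.
Proof.
move=> hf hg hgf dL; rewrite /hom_rank.
apply: (LA (g := linfun (push f))).
  apply/subvP => y /memv_imgP [a aA ->]; rewrite linfunE'; last exact: push_is_linear.
  case/cyclesP: aA => aC ba; apply: cyclesI; first exact: push_Cspace hf a aC.
  by rewrite -push_bd ba linear0.
move=> a aA; rewrite linfunE'; last exact: push_is_linear.
case/memv_imgP => b bC hb.
rewrite bdryE in hb.
have h1 : push g (push f a) \in boundaries F k LY.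
  by rewrite hb push_bd; apply: bd_boundaries; exact: push_Cspace hg b bC.
have h2 := tele hgf dL aA.
rewrite push_comp in h1.
have -> : a = push (g \o f) a - (push (g \o f) a - a) by rewrite opprB addrC subrK.
exact: memvB.
Qed.

End HLsec.

Section Metric.
Variable R : realType.

Lemma BV_le (V : finType) (d : R -> V -> V -> R) a b s x y :
  (forall t, 0 <= d t x y) -> a <= s <= b -> bigvee d a b x y <= d s x y.
Proof.
move=> d0 hs; rewrite /bigvee; apply: ge_inf; last by exists s.
by exists 0 => _ [t _ <-]; exact: d0.
Qed.

Lemma BV_mono (V : finType) (d : R -> V -> V -> R) a b a' b' x y :
  (forall t, 0 <= d t x y) -> a <= a' -> a' <= b' -> b' <= b ->
  bigvee d a b x y <= bigvee d a' b' x y.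
Proof.
move=> d0 h1 h2 h3; rewrite [X in _ <= X]/bigvee; apply: lb_le_inf.
  by exists (d a' x y); exists a' => //; rewrite /= lexx h2.
move=> _ [s /= /andP[s1 s2] <-]; apply: BV_le => //.
by rewrite (le_trans h1 s1) (le_trans s2 h3).
Qed.

Lemma BV_lt (V : finType) (d : R -> V -> V -> R) a b x y c :
  a <= b -> bigvee d a b x y < c -> exists s, a <= s <= b /\ d s x y < c.
Proof.
move=> ab /inf_lt; case.
  by exists (d a x y); exists a => //; rewrite /= lexx ab.
by move=> _ [s hs <-] lt; exists s.
Qed.

Lemma TR (X Y : finType) (dX : R -> X -> X -> R) (dY : R -> Y -> Y -> R)
    (Z : Type) (pX : Z -> X) (pY : Z -> Y) (e : R) :
  (forall t x y, 0 <= dX t x y) -> 0 <= e ->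
  (forall t z z', bigvee dX (t - e) (t + e) (pX z) (pX z') <=
                  dY t (pY z) (pY z') + 2 * e) ->
  forall z z' p q a' b' c, p <= q -> a' <= p - e -> q + e <= b' ->
  bigvee dY p q (pY z) (pY z') <= c ->
  bigvee dX a' b' (pX z) (pX z') <= c + 2 * e.
Proof.
move=> dX0 e0 H z z' p q a' b' c pq ha hb hc; apply/ler_addgt0Pr => eta eta0.
have : bigvee dY p q (pY z) (pY z') < c + eta by rewrite (le_lt_trans hc) // ltrDl.
case/(BV_lt pq) => s [/andP[ps sq] hs].
apply: (le_trans (BV_mono (a' := s - e) (b' := s + e) _ _ _ _)) => //.
- by apply: (le_trans ha); rewrite lerD2r.
- lra.
- by apply: le_trans hb; rewrite lerD2r.
apply: (le_trans (H s z z')); lra.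
Qed.

Lemma rips_dclosed (V : finType) (d : V -> V -> R) δ : dclosed (rips d δ).
Proof.
move=> A B /andP[_ hA] BA Bn; rewrite /rips Bn /=.
apply/forall_inP => x xB; apply/forall_inP => y yB.
have xA := fintype.subsetP BA x xB; have yA := fintype.subsetP BA y yB.
by move/forall_inP/(_ x xA)/forall_inP/(_ y yA): hA.
Qed.

Lemma rips_img (V W : finType) (f : V -> W) (d : V -> V -> R) δ
    (d' : W -> W -> R) δ' S :
  rips d δ S -> (forall x y, d x y <= δ -> d' (f x) (f y) <= δ') ->
  rips d' δ' (f @: S).
Proof.
move=> /andP[Sn hS] H; apply/andP; split.
  case/finset.set0Pn: Sn => x xS; apply/finset.set0Pn; exists (f x); exact: imset_f.
apply/forall_inP => _ /imsetP[x xS ->]; apply/forall_inP => _ /imsetP[y yS ->].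
by apply: H; move/forall_inP/(_ x xS)/forall_inP/(_ y yS): hS.
Qed.

Lemma rips_union (V : finType) (h : V -> V) (d : V -> V -> R) δ
    (d' : V -> V -> R) δ' S :
  rips d δ S ->
  (forall x y, d x y <= δ ->
     [/\ d' x y <= δ', d' x (h y) <= δ', d' (h x) y <= δ' & d' (h x) (h y) <= δ']) ->
  rips d' δ' (S :|: h @: S).
Proof.
move=> /andP[Sn hS] H; apply/andP; split.
  case/finset.set0Pn: Sn => x xS; apply/finset.set0Pn; exists x; by rewrite inE xS.
have hp : forall x y, x \in S -> y \in S -> d x y <= δ.
  by move=> x y xS yS; move/forall_inP/(_ x xS)/forall_inP/(_ y yS): hS.
apply/forall_inP => x; rewrite inE => /orP[xS|/imsetP[x0 x0S ->]];
  apply/forall_inP => y; rewrite inE => /orP[yS|/imsetP[y0 y0S ->]].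
- by case: (H x y (hp _ _ xS yS)).
- by case: (H x y0 (hp _ _ xS y0S)).
- by case: (H x0 y (hp _ _ x0S yS)).
- by case: (H x0 y0 (hp _ _ x0S y0S)).
Qed.

Lemma le6_shift (a : R6 R) e : 0 <= e -> le6 a (shift6 a e).
Proof. move=> e0; rewrite /le6 /=; split; try split; lra. Qed.

Lemma le6_trans (a b c : R6 R) : le6 a b -> le6 b c -> le6 a c.
Proof.
case: a b c => [? ? ? ? ? ?] [? ? ? ? ? ?] [? ? ? ? ? ?].
rewrite /le6 /= => [[? ? ? ? [? ?]] [? ? ? ? [? ?]]]; split; try split; lra.
Qed.

End Metric.

Section Main.
Variable R : realType.

Lemma hom_part (F : fieldType) k (X Y : finType) (dX : R -> X -> X -> R)
    (dY : R -> Y -> Y -> R) (Z : Type) (pX : Z -> X) (pY : Z -> Y) (e : R) :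
  (forall t x y, 0 <= dX t x y) -> (forall t x y, 0 <= dY t x y) -> 0 <= e ->
  (forall x, exists z, pX z = x) -> (forall y, exists z, pY z = y) ->
  (forall t z z', bigvee dX (t - e) (t + e) (pX z) (pX z') <= dY t (pY z) (pY z') + 2 * e) ->
  (forall t z z', bigvee dY (t - e) (t + e) (pY z) (pY z') <= dX t (pX z) (pX z') + 2 * e) ->
  forall a : R6 R, admissible a -> admissible (shift6 a (2 * e)) ->
  (hom_rank F k (rips (bigvee dY (c1 (shift6 a (2 * e))) (c2 (shift6 a (2 * e)))) (c3 (shift6 a (2 * e))))
                (rips (bigvee dY (c4 (shift6 a (2 * e))) (c5 (shift6 a (2 * e)))) (c6 (shift6 a (2 * e))))
   <= hom_rank F k (rips (bigvee dX (c1 a) (c2 a)) (c3 a))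
                   (rips (bigvee dX (c4 a) (c5 a)) (c6 a)))%N.
Proof.
move=> dX0 dY0 e0 sX sY H1 H2 a adA adB.
case: adA => a12 a45 [a3 a6] [a41 a25] a36.
case: adB; rewrite /= => b12 b45 [b3 b6] [b41 b25] b36.
pose zY (y : Y) := sval (cid (sY y)).
pose zX (x : X) := sval (cid (sX x)).
have hzY : forall y, pY (zY y) = y by move=> y; rewrite /zY; case: (cid _).
have hzX : forall x, pX (zX x) = x by move=> x; rewrite /zX; case: (cid _).
pose f (y : Y) := pX (zY y).
pose g (x : X) := pY (zX x).
have TRXY := TR dX0 e0 H1.
have TRYX := TR dY0 e0 H2.
have pf : forall y y', bigvee dY (c1 a + 2 * e) (c2 a - 2 * e) y y' <= c3 a - 2 * e ->
    bigvee dX (c1 a) (c2 a) (f y) (f y') <= c3 a.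
  move=> y y' hyy.
  have h1 : c1 a <= c1 a + 2 * e - e by lra.
  have h2 : c2 a - 2 * e + e <= c2 a by lra.
  have := TRXY (zY y) (zY y') _ _ _ _ (c3 a - 2 * e) b12 h1 h2.
  by rewrite !hzY subrK; apply.
have pg : forall x x', bigvee dX (c4 a) (c5 a) x x' <= c6 a ->
    bigvee dY (c4 a - 2 * e) (c5 a + 2 * e) (g x) (g x') <= c6 a + 2 * e.
  move=> x x' hxx.
  have h1 : c4 a - 2 * e <= c4 a - e by lra.
  have h2 : c5 a + e <= c5 a + 2 * e by lra.
  have := TRYX (zX x) (zX x') _ _ _ _ (c6 a) a45 h1 h2.
  by rewrite !hzX; apply.
have h1 : c4 a - 2 * e <= c1 a - e by lra.
have h2 : c2 a + e <= c5 a + 2 * e by lra.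
apply: (@HL F X Y f g).
- move=> S KS _; apply: rips_img KS _; exact: pf.
- move=> S LS _; apply: rips_img LS _; exact: pg.
- move=> S KS _; apply: rips_union KS _ => y y' hyy; split.
  + have hm : bigvee dY (c4 a - 2 * e) (c5 a + 2 * e) y y' <=
               bigvee dY (c1 a + 2 * e) (c2 a - 2 * e) y y'.
      by apply: BV_mono => //; lra.
    apply: (le_trans hm); apply: (le_trans hyy); lra.
  + have := TRYX (zY y) (zX (f y')) _ _ _ _ (c3 a) a12 h1 h2.
    rewrite hzY hzX => /(_ (pf _ _ hyy)) h.
    rewrite /= /g; apply: (le_trans h); lra.
  + have := TRYX (zX (f y)) (zY y') _ _ _ _ (c3 a) a12 h1 h2.
    rewrite hzY hzX => /(_ (pf _ _ hyy)) h.
    rewrite /= /g; apply: (le_trans h); lra.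
  + rewrite /=; apply: (le_trans (pg _ _ _)); last lra.
    have hm : bigvee dX (c4 a) (c5 a) (f y) (f y') <= bigvee dX (c1 a) (c2 a) (f y) (f y').
      by apply: BV_mono => //; lra.
    apply: (le_trans hm); apply: (le_trans (pf _ _ hyy)); lra.
- exact: rips_dclosed.
Qed.

End Main.

Section Main2.
Variable R : realType.

Lemma one_dir (F : fieldType) k (X Y : finType) (dX : R -> X -> X -> R)
    (dY : R -> Y -> Y -> R) (Z : Type) (pX : Z -> X) (pY : Z -> Y) (e : R) :
  (forall t x y, 0 <= dX t x y) -> (forall t x y, 0 <= dY t x y) -> 0 <= e ->
  (forall x, exists z, pX z = x) -> (forall y, exists z, pY z = y) ->
  (forall t z z', bigvee dX (t - e) (t + e) (pX z) (pX z') <= dY t (pY z) (pY z') + 2 * e) ->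
  (forall t z z', bigvee dY (t - e) (t + e) (pY z) (pY z') <= dX t (pX z) (pX z') + 2 * e) ->
  forall a : R6 R, (rk F k dY (shift6 a (2 * e)) <= rk F k dX a)%E.
Proof.
move=> dX0 dY0 e0 sX sY H1 H2 a.
have e2 : 0 <= 2 * e by lra.
have lab := le6_shift a e2.
rewrite /rk.
case: (asboolP (admissible a)) => adA.
  case: (asboolP (admissible (shift6 a (2 * e)))) => adB.
    by rewrite lee_fin ler_nat; apply: hom_part.
  case: (asboolP (trivially_nonadmissible (shift6 a (2 * e)))) => tb.
    exfalso; apply: tb; exists a; split => // eab.
    by apply: adB; rewrite -eab.
  by rewrite lee_fin ler0n.
case: (asboolP (trivially_nonadmissible a)) => ta; first by rewrite leey.
have [c [lca nca adc]] := contrapT ta.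
have nadB : ~ admissible (shift6 a (2 * e)).
  move=> adB; apply: adA.
  case: adB; rewrite /= => b12 b45 [b3 b6] [b41 b25] b36.
  case: adc => c12 c45 [c3 c6] [c41 c25] c36.
  case: lca => l1 l2 l3 l4 [l5 l6].
  split; try split; lra.
rewrite (asboolF nadB) (asboolF (P := trivially_nonadmissible _)) //.
move=> tb; apply: tb; exists c; split => //.
- exact: le6_trans lca lab.
- by move=> ceq; apply: nadB; rewrite -ceq.
Qed.

Lemma main_thm (F : fieldType) (X Y : finType)
  (dX : R -> X -> X -> R) (dY : R -> Y -> Y -> R) (k : nat) :
  is_DMS dX -> is_DMS dY ->
  (d_I (rk F k dX) (rk F k dY) <= 2%:E * d_dyn dX dY)%E.
Proof.
move=> [_ pmX _ _] [_ pmY _ _].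
have dX0 : forall t x y, 0 <= dX t x y by move=> t x y; case: (pmX t).
have dY0 : forall t x y, 0 <= dY t x y by move=> t x y; case: (pmY t).
have key : forall e, 0 <= e ->
    (exists (Z : Type) (pX : Z -> X) (pY : Z -> Y),
       [/\ (forall x, exists z, pX z = x), (forall y, exists z, pY z = y) &
           is_eps_tripod dX dY pX pY e]) ->
    (d_I (rk F k dX) (rk F k dY) <= (2 * e)%:E)%E.
  move=> e e0 [Z [pX [pY [sX sY tri]]]].
  apply: ereal_inf_lbound; exists (2 * e) => //; split; first lra.
  move=> a; split.
    by apply: one_dir => // t z z'; case: (tri t z z').
  by apply: one_dir => // t z z'; case: (tri t z z').
case hD: (d_dyn dX dY) => [r| |].
- rewrite -EFinM; apply/lee_addgt0Pr => eta eta0.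
  have : (d_dyn dX dY < (r + eta / 2)%:E)%E.
    by rewrite hD lte_fin ltrDl divr_gt0.
  case/ereal_inf_lt => _ [e [e0 hz] <-]; rewrite lte_fin => lte.
  apply: (le_trans (key e e0 hz)); rewrite -EFinD lee_fin; lra.
- by rewrite gt0_muley ?lte_fin // leey.
- exfalso.
  have : (0%:E <= d_dyn dX dY)%E.
    apply: le_ereal_inf_tmp => _ [e [e0 _] <-]; by rewrite lee_fin.
  by rewrite hD.
Qed.

End Main2.


Local Close Scope ring_scope.
Unset Implicit Arguments.

Theorem theorem4p4 (R : realType) (F : fieldType) (X Y : finType)
  (dX : R -> X -> X -> R) (dY : R -> Y -> Y -> R) (k : nat) :
  is_DMS dX -> is_DMS dY ->
  (d_I (rk F k dX) (rk F k dY) <= 2%:E * d_dyn dX dY)%E.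
Proof. exact: main_thm. Qed.
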